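(* There is an absolute constant $c_0>0$ such that for every $\epsilon\in(0,1/2]$ and every integer $d\ge 1$, with $n=2^{d+1}-2$, the binary-tree function $f:\{0,1\}^n\to\{0,1\}$ of depth $d$ (which is computable by a read-once formula) satisfies, under unit costs ($c_i=1$ for all $i$) and $p_i=\frac{1+\epsilon}{2}$ for all $i$, $$\mathsf{OPT}_{\mathcal N}(f,c,p)\ge c_0\,\epsilon^3\, n^{1-2\epsilon/\ln 2}\cdot \mathsf{OPT}_{\mathcal A}(f,c,p).$$
   Context: Stochastic Boolean Function Evaluation (SBFE) setup: $f:\{0,1\}^n\to\{0,1\}$ is a known Boolean function, $c\in\mathbb{R}_{>0}^n$ a cost vector and $p\in(0,1)^n$ a probability vector. The unknown input $x\in\{0,1\}^n$ is random with independent coordinates and $\Pr(x_i=1)=p_i$. The value $x_i$ can only be learned by testing variable $i$, at cost $c_i$. A strategy tests variables sequentially until $f(x)$ is determined, i.e. until $f(x')=f(x)$ for every $x'$ agreeing with $x$ on all tested coordinates. An adaptive strategy is a decision tree (the next test may depend on previous outcomes); a non-adaptive strategy is a fixed permutation of $[n]$, with variables tested in that order until $f(x)$ is determined. $\mathrm{cost}_{c,p}(f,S)$ is the expected total cost of tests performed by $S$ for random $x$. $\mathsf{OPT}_{\mathcal A}(f,c,p)$ (resp. $\mathsf{OPT}_{\mathcal N}(f,c,p)$) is the minimum of $\mathrm{cost}_{c,p}(f,S)$ over all adaptive (resp. non-adaptive) strategies. Binary-tree function of depth $d$: take the complete binary tree of depth $d$ (root at depth $0$, $2^d$ leaves at depth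 $d$); it has $n=2^{d+1}-2$ edges, numbered $1,\dots,n$, and variable $x_i$ is associated with edge $i$. A leaf is alive if $x_i=1$ for every edge $i$ on the path from the root to that leaf. Then $f(x)=1$ iff at least one leaf is alive. (A read-once formula is a tree whose internal nodes are labeled $\wedge$ or $\vee$ and whose leaves are labeled by distinct variables.) *)

(* Defs.v *)
From HB Require Import structures.
From mathcomp Require Import all_boot all_order all_algebra.
From mathcomp Require Import all_classical all_reals.
From mathcomp Require Import exp.
From mathcomp Require Import fingroup perm.
From mathcomp Require Import Rstruct.

Set Implicit Arguments.
Unset Strict Implicit.
Unset Printing Implicit Defensive.

Import Order.TTheory GRing.Theory Num.Theory.
Local Open Scope ring_scope.

Definition input (n : nat) := {ffun 'I_n -> bool}.

Section SBFE.
Variable R : realType.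
Variable n : nat.
Variable f : input n -> bool.
Variable c : 'I_n -> R.
Variable p : 'I_n -> R.

Definition prob (x : input n) : R :=
  \prod_(i < n) (if x i then p i else 1 - p i).

Definition determined (S : {set 'I_n}) (x : input n) : bool :=
  [forall y : input n, [forall i in S, y i == x i] ==> (f y == f x)].

(* Adaptive strategies: decision trees.  At Node i t0 t1, variable i is
   tested, and one continues with t1 if x_i = 1, with t0 otherwise. *)
Inductive dtree := Leaf | Node of 'I_n & dtree & dtree.

Fixpoint run_ok (t : dtree) (x : input n) (S : {set 'I_n}) : bool :=
  determined S x ||
  (match t with
   | Leaf => false
   | Node i t0 t1 => run_ok (if x i then t1 else t0) x (i |: S)
   end).

Fixpoint run_cost (t : dtree) (x : input n) (S : {set 'I_n}) : R :=
  if determined S x then 0 else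
  match t with
  | Leaf => 0
  | Node i t0 t1 => c i + run_cost (if x i then t1 else t0) x (i |: S)
  end.

Definition valid_tree (t : dtree) : Prop := forall x : input n, run_ok t x (finset.set0).

Definition cost_adaptive (t : dtree) : R :=
  \sum_(x : input n) prob x * run_cost t x (finset.set0).

(* Non-adaptive strategies: a permutation s of [n]; variables s 0, s 1, ...
   are tested in that order until f(x) is determined. *)
Definition first_tested (s : {perm 'I_n}) (k : nat) : {set 'I_n} :=
  [set s j | j : 'I_n & (j < k)%N].

Definition nonadaptive_run_cost (s : {perm 'I_n}) (x : input n) : R :=
  \sum_(k < n) (if determined (first_tested s k) x then 0 else c (s k)).

Definition cost_nonadaptive (s : {perm 'I_n}) : R :=
  \sum_(x : input n) prob x * nonadaptive_run_cost s x.

Definition OPT_A : R :=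
  inf [set r : R | exists t : dtree, valid_tree t /\ r = cost_adaptive t].

Definition OPT_N : R :=
  inf [set r : R | exists s : {perm 'I_n}, r = cost_nonadaptive s].

End SBFE.

(* Nodes of the complete binary tree are
   numbered in heap order 1 .. 2^(d+1)-1 (root 1, children of v are 2v, 2v+1);
   the edge from the parent of node v (v >= 2) to v is variable v-2, so the
   n = 2^(d+1)-2 edges are the variables 0 .. n-1.  Leaves are the nodes
   2^d + l, l < 2^d; the edges on the root-to-leaf path of node v are those
   entering v / 2^k for k < d. *)
Definition nedges (d : nat) : nat := (2 ^ d.+1 - 2)%N.

Definition bit_at (n : nat) (x : input n) (j : nat) : bool :=
  [exists i : 'I_n, (nat_of_ord i == j) && x i].

Definition binary_tree_fun (d : nat) (x : input (nedges d)) : bool :=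
  [exists l : 'I_(2 ^ d),
     [forall k : 'I_d, bit_at x ((2 ^ d + l) %/ 2 ^ k - 2)%N]].

(* Main.v *)
Require Import Defs.
From HB Require Import structures.
From mathcomp Require Import all_boot all_order all_algebra.
From mathcomp Require Import all_classical all_reals.
From mathcomp Require Import sequences exp.
From mathcomp Require Import fingroup perm.
From mathcomp Require Import Rstruct.
From mathcomp Require Import ring lra zify.
Set Implicit Arguments.
Unset Strict Implicit.
Unset Printing Implicit Defensive.
Import Order.TTheory GRing.Theory Num.Theory.
Local Open Scope ring_scope.
Lemma prob_all (R : realType) (n : nat) (p : 'I_n -> R) (S : {set 'I_n}) :
  \sum_(x : input n) prob p x * ([forall i in S, x i] : bool)%:R = \prod_(i in S) p i.
Proof.
pose F := fun (i : 'I_n) (b : bool) =>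
  (if b then p i else 1 - p i) * (if i \in S then (if b then 1 else 0) else 1).
transitivity (\sum_(x : input n) \prod_i F i (x i)).
  apply: eq_bigr => x _; rewrite /prob /F big_split /=; congr (_ * _).
  case: (boolP [forall i in S, x i]) => [/forall_inP H|/forall_inPn [i iS xi]].
    by rewrite big1 // => i _; case: ifP => // /H ->.
  rewrite (bigD1 i) //= iS (negbTE xi) mul0r //.
rewrite -bigA_distr_bigA /= (big_mkcond (mem S)) /=; apply: eq_bigr => i _.
rewrite big_bool /F /=; case: (i \in S); lra.
Qed.

Lemma prob_sum1 (R : realType) (n : nat) (p : 'I_n -> R) :
  \sum_(x : input n) prob p x = 1.
Proof.
have := prob_all p finset.set0; rewrite big_set0 => <-; apply: eq_bigr => x _.
suff -> : [forall i in finset.set0, x i] by rewrite mulr1.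
by apply/forall_inP => i; rewrite finset.in_set0.
Qed.
Local Open Scope nat_scope.

Lemma ge2_div (v i j : nat) : (2 ^ j <= v)%N -> (i < j)%N -> (2 <= v %/ 2 ^ i)%N.
Proof.
move=> hv hij; rewrite leq_divRL ?expn_gt0 //.
apply: leq_trans hv; rewrite mulnC -expnSr leq_exp2l //.
Qed.

Lemma div_strict (v i i' : nat) : (0 < v %/ 2 ^ i)%N -> (i < i')%N -> (v %/ 2 ^ i' < v %/ 2 ^ i)%N.
Proof.
move=> hp hii.
apply: (@leq_trans (v %/ 2 ^ i.+1).+1).
  by rewrite ltnS leq_div2l ?expn_gt0 // leq_exp2l.
by rewrite expnS mulnC divnMA ltn_Pdiv.
Qed.

Lemma div_inj (v i i' : nat) : (0 < v %/ 2 ^ i)%N -> (0 < v %/ 2 ^ i')%N ->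
  v %/ 2 ^ i = v %/ 2 ^ i' -> i = i'.
Proof.
move=> h1 h2 e; case: (ltngtP i i') => // hi.
  by have := div_strict h1 hi; rewrite e ltnn.
by have := div_strict h2 hi; rewrite e ltnn.
Qed.

Lemma depth_div (v i j : nat) : (2 ^ j <= v < 2 ^ j.+1)%N -> (i <= j)%N ->
  (2 ^ (j - i) <= v %/ 2 ^ i < 2 ^ (j - i).+1)%N.
Proof.
move=> /andP[h1 h2] hij; apply/andP; split.
  by rewrite leq_divRL ?expn_gt0 // -expnD subnK.
by rewrite ltn_divLR ?expn_gt0 // -expnD addSn subnK.
Qed.

Lemma pow_uniq (a b m : nat) : (2 ^ a <= m < 2 ^ a.+1)%N -> (2 ^ b <= m < 2 ^ b.+1)%N -> a = b.
Proof.
move=> /andP[h1 h2] /andP[h3 h4]; case: (ltngtP a b) => // hab.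
  have : (2 ^ a.+1 <= 2 ^ b)%N by rewrite leq_exp2l.
  by move=> h; have := leq_trans h h3; rewrite leqNgt h2.
have : (2 ^ b.+1 <= 2 ^ a)%N by rewrite leq_exp2l.
by move=> h; have := leq_trans h h1; rewrite leqNgt h4.
Qed.

Section Heap.
Variable d : nat.
Hypothesis d_gt0 : (0 < d)%N.
Local Notation n := (nedges d).

Lemma n_ge2 : (2 <= n)%N.
Proof.
rewrite /nedges; have : (4 <= 2 ^ d.+1)%N.
  by rewrite (_ : 4 = 2 ^ 2)%N // leq_exp2l.
lia.
Qed.

Lemma n_gt0 : (0 < n)%N.
Proof. by have := n_ge2; lia. Qed.

Lemma idx_lt (v i : nat) : (v < 2 ^ d.+1)%N -> (v %/ 2 ^ i - 2 < n)%N.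
Proof.
move=> hv; have := leq_div v (2 ^ i); have := n_ge2; rewrite /nedges in hv *.
lia.
Qed.

Definition ES (v j : nat) : {set 'I_n} :=
  [set e : 'I_n | [exists i : 'I_j, val e == v %/ 2 ^ i - 2]].

Lemma bit_atE (x : input n) (k : nat) (H : (k < n)%N) : bit_at x k = x (Ordinal H).
Proof.
apply/existsP/idP => [[i /andP[/eqP ei xi]]|xk].
  by have -> : Ordinal H = i by apply: val_inj.
by exists (Ordinal H); rewrite eqxx.
Qed.

Lemma reach_ES (x : input n) (v j : nat) : (v < 2 ^ d.+1)%N ->
  [forall i : 'I_j, bit_at x (v %/ 2 ^ i - 2)] = [forall e in ES v j, x e].
Proof.
move=> hv; apply/forallP/forall_inP => [H e|H i].
  rewrite inE => /existsP[i /eqP ei].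
  by have := H i; rewrite (bit_atE _ (idx_lt i hv)); congr (x _) ; apply: val_inj.
rewrite (bit_atE _ (idx_lt i hv)); apply: H; rewrite inE; apply/existsP; exists i => //.
Qed.

Lemma card_ES (v j : nat) : (2 ^ j <= v)%N -> (v < 2 ^ d.+1)%N -> #|ES v j| = j.
Proof.
move=> hj hv; pose e0 : 'I_n := Ordinal n_gt0.
pose g := fun i : 'I_j => insubd e0 (v %/ 2 ^ i - 2).
have gE i : val (g i) = v %/ 2 ^ i - 2 by rewrite /g val_insubd idx_lt.
have -> : ES v j = [set g i | i : 'I_j].
  apply/setP => e; rewrite inE; apply/existsP/imsetP => [[i /eqP ei]|[i _ ->]].
    by exists i => //; apply: val_inj; rewrite gE.
  by exists i; rewrite gE.
rewrite card_imset ?cardsT ?card_ord // => i i' /(congr1 val); rewrite !gE => e.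
have h1 := ge2_div hj (ltn_ord i); have h2 := ge2_div hj (ltn_ord i').
apply: val_inj; apply: (@div_inj v); [lia|lia|lia].
Qed.

End Heap.
Local Open Scope ring_scope.

Section Leaves.
Variable R : realType.
Variable d : nat.
Hypothesis d_gt0 : (0 < d)%N.
Local Notation n := (nedges d).
Variable q : R.
Hypothesis q0 : 0 <= q.
Hypothesis q1 : q <= 1.
Local Notation p := (fun _ : 'I_n => q).

Lemma pr_all (S : {set 'I_n}) :
  \sum_(x : input n) prob p x * ([forall e in S, x e] : bool)%:R = q ^+ #|S|.
Proof. by rewrite prob_all prodr_const. Qed.

Definition leafv (l : 'I_(2 ^ d)) : nat := (2 ^ d + l)%N.

Lemma leaf_bounds (l : 'I_(2 ^ d)) : (2 ^ d <= leafv l < 2 ^ d.+1)%N.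
Proof. by rewrite /leafv leq_addr /= expnS mul2n -addnn ltn_add2l ltn_ord. Qed.

Definition L (l : 'I_(2 ^ d)) : {set 'I_n} := ES d (leafv l) d.

Lemma card_L l : #|L l| = d.
Proof. by have /andP[h1 h2] := leaf_bounds l; rewrite card_ES. Qed.

Lemma f_L (x : input n) :
  binary_tree_fun x = [exists l, [forall e in L l, x e]].
Proof.
apply: eq_existsb => l; have /andP[_ h2] := leaf_bounds l.
by rewrite -reach_ES.
Qed.

Definition alive (x : input n) l : R := ([forall e in L l, x e] : bool)%:R.
Definition Z (x : input n) : R := \sum_l alive x l.

Lemma EZ : \sum_(x : input n) prob p x * Z x = (2 ^ d)%:R * q ^+ d.
Proof.
under eq_bigr do rewrite /Z big_distrr /=.
rewrite exchange_big /=.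
under eq_bigr do rewrite pr_all card_L.
by rewrite sumr_const card_ord mulr_natl.
Qed.

Definition eqj (l l' : 'I_(2 ^ d)) (j : nat) : bool :=
  (leafv l %/ 2 ^ j == leafv l' %/ 2 ^ j)%N.

Definition cj (j : nat) : R := if (j < d)%N then q ^+ j - q ^+ j.+1 else q ^+ d.

Lemma cj_ge0 j : 0 <= cj j.
Proof.
rewrite /cj; case: ifP => _; last exact: exprn_ge0.
rewrite subr_ge0 exprS; have h := exprn_ge0 j q0.
have : 0 <= (1 - q) * q ^+ j by apply: mulr_ge0 => //; have := q1; lra.
lra.
Qed.

Lemma eqj_d l l' : eqj l l' d.
Proof.
apply/eqP; have /andP[a1 a2] := leaf_bounds l; have /andP[b1 b2] := leaf_bounds l'.
have h1 := @depth_div _ d d (leaf_bounds l) (leqnn d).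
have h2 := @depth_div _ d d (leaf_bounds l') (leqnn d).
rewrite subnn expn0 expn1 in h1 h2; move: h1 h2; set a := (_ %/ _)%N; set b := (_ %/ _)%N; lia.
Qed.

Lemma eqj_mono l l' j k : (j <= k)%N -> eqj l l' j -> eqj l l' k.
Proof.
move=> hjk /eqP e; apply/eqP.
by rewrite -(subnKC hjk) expnD !divnMA e.
Qed.

Lemma card_union l l' (m : nat) : (m <= d)%N ->
  (forall k, (k < m)%N -> ~~ eqj l l' k) -> (d + m <= #|L l :|: L l'|)%N.
Proof.
move=> hm hk.
have sub : L l :|: ES d (leafv l') m \subset L l :|: L l'.
  apply/fintype.subsetP => e; rewrite !inE => /orP[->//|/existsP[i ei]].
  apply/orP; right; apply/existsP; exists (widen_ord hm i) => //.
apply: leq_trans (subset_leq_card sub).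
have /andP[b1 b2] := leaf_bounds l'.
rewrite cardsU card_L card_ES //; last first.
  by apply: leq_trans b1; rewrite leq_exp2l.
suff -> : #|L l :&: ES d (leafv l') m| = 0%N by rewrite subn0.
apply/eqP; rewrite cards_eq0; apply/eqP/setP => e; rewrite !inE.
apply/negP => /andP[/existsP[i /eqP ei] /existsP[k /eqP ek]].
have /andP[a1 a2] := leaf_bounds l.
have g1 := ge2_div a1 (ltn_ord i).
have g2 : (2 <= leafv l' %/ 2 ^ k)%N.
  by apply: (ge2_div b1); apply: leq_trans (ltn_ord k) hm.
have ee : (leafv l %/ 2 ^ i = leafv l' %/ 2 ^ k)%N by lia.
have hi := depth_div (leaf_bounds l) (ltnW (ltn_ord i)).
have hk' : (k <= d)%N by apply: leq_trans (ltnW (ltn_ord k)) hm.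
have hk2 := depth_div (leaf_bounds l') hk'.
rewrite ee in hi.
have := pow_uniq hi hk2 => ed.
have eik : nat_of_ord i = nat_of_ord k by have := ltn_ord i; lia.
by have := hk k (ltn_ord k); rewrite /eqj -{1}eik ee eqxx.
Qed.

Lemma pair_bound l l' :
  q ^+ #|L l :|: L l'| <= q ^+ d * \sum_(j < d.+1) cj j * (eqj l l' j : bool)%:R.
Proof.
have ex : exists j, eqj l l' j by exists d; exact: eqj_d.
case: (ex_minnP ex) => m hm hmin.
have md : (m <= d)%N by apply: hmin; exact: eqj_d.
have hk : forall k, (k < m)%N -> ~~ eqj l l' k.
  by move=> k km; apply/negP => /hmin; rewrite leqNgt km.
have cu := card_union md hk.
apply: (@le_trans _ _ (q ^+ (d + m))); first exact: ler_wiXn2l.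
rewrite exprD ler_wpM2l ?exprn_ge0 //.
apply: (@le_trans _ _ (\sum_(j < d.+1) cj j * ((m <= j)%N : bool)%:R)); last first.
  apply: ler_sum => j _; apply: ler_wpM2l; first exact: cj_ge0.
  by case: (leqP m j) => // hmj; rewrite (eqj_mono hmj hm).
rewrite big_ord_recr /=.
rewrite -(big_mkord xpredT (fun j => cj j * ((m <= j)%N : bool)%:R)).
rewrite {2}/cj ltnn md mulr1 (big_cat_nat (leq0n m) md) /=.
rewrite big1_seq ?add0r; last first.
  by move=> j /andP[_]; rewrite mem_index_iota => /andP[_ jm]; rewrite leqNgt jm mulr0.
rewrite (@telescope_sumr_eq _ m d (fun k => - q ^+ k)) //; first by rewrite opprK; lra.
by move=> k /andP[mk kd]; rewrite /cj kd mk mulr1; lra.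
Qed.

Lemma card_eqj l j : (#|[set l' | eqj l l' j]| <= 2 ^ j)%N.
Proof.
have hp : (0 < 2 ^ j)%N by rewrite expn_gt0.
pose g := fun l' : 'I_(2 ^ d) => Ordinal (ltn_pmod (leafv l') hp).
rewrite -[X in (_ <= X)%N]card_ord; apply: (leq_card_in g) => a b.
rewrite !inE => /eqP ea /eqP eb /(congr1 val) /= em.
apply: ord_inj; have := divn_eq (leafv a) (2 ^ j); have := divn_eq (leafv b) (2 ^ j).
rewrite -ea -eb em /leafv; set X := (_ * _)%N; set Y := (_ %% _)%N; clearbody X Y; lia.
Qed.

Definition Gd : R := \sum_(j < d.+1) cj j * (2 ^ j)%:R.

Lemma EZ2 : \sum_(x : input n) prob p x * Z x ^+ 2 <= (2 ^ d)%:R * q ^+ d * Gd.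
Proof.
have e1 : forall x, Z x ^+ 2 = \sum_l \sum_l' ([forall e in L l :|: L l', x e] : bool)%:R.
  move=> x; rewrite expr2 /Z big_distrl /=; apply: eq_bigr => l _.
  rewrite big_distrr /=; apply: eq_bigr => l' _; rewrite /alive -natrM mulnb; congr (_%:R); congr (nat_of_bool _).
  apply/idP/idP => [/andP[/forall_inP h1 /forall_inP h2]|/forall_inP h].
    by apply/forall_inP => e; rewrite inE => /orP[/h1|/h2].
  by apply/andP; split; apply/forall_inP => e he; apply: h; rewrite inE he ?orbT.
under eq_bigr do rewrite e1 big_distrr /=.
rewrite exchange_big /=.
apply: (@le_trans _ _ (\sum_(l : 'I_(2 ^ d)) q ^+ d * Gd)); last first.
  by rewrite sumr_const card_ord mulr_natl mulrnAl.
apply: ler_sum => l _.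
under eq_bigr do rewrite big_distrr /=.
rewrite exchange_big /=.
under eq_bigr do rewrite pr_all.
apply: (@le_trans _ _ (\sum_(l' : 'I_(2 ^ d)) q ^+ d * \sum_(j < d.+1) cj j * (eqj l l' j : bool)%:R)).
  by apply: ler_sum => l' _; exact: pair_bound.
rewrite -big_distrr /= ler_wpM2l ?exprn_ge0 // exchange_big /= /Gd.
apply: ler_sum => j _; rewrite -big_distrr /= ler_wpM2l ?cj_ge0 //.
rewrite -natr_sum ler_nat.
apply: leq_trans (card_eqj l j); rewrite -sum1_card [in X in (_ <= X)%N]big_mkcond /=.
by apply: eq_leq; apply: eq_bigr => l' _; rewrite inE; case: eqj.
Qed.

End Leaves.

Lemma prob_ge0 (R : realType) (n : nat) (q : R) (x : input n) :
  0 <= q -> q <= 1 -> 0 <= prob (fun _ : 'I_n => q) x.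
Proof.
move=> h0 h1; rewrite /prob; apply: prodr_ge0 => i _; case: (x i) => //; lra.
Qed.

Lemma G_bound (R : realType) (q : R) (D : nat) : 1/2 < q -> q <= 1 ->
  \sum_(j < D) (q ^+ j - q ^+ j.+1) * (2 ^ j)%:R + q ^+ D * (2 ^ D)%:R
  <= (2 * q) ^+ D * q / (2 * q - 1).
Proof.
move=> h0 h1; have hpos : 0 < 2 * q - 1 by lra.
elim: D => [|D IH].
  rewrite big_ord0 !expr0 expn0 add0r !mul1r ler_pdivlMr //; lra.
rewrite big_ord_recr /=.
have e3 : forall k, (2 * q) ^+ k = (2 ^ k)%:R * q ^+ k by move=> k; rewrite exprMn natrX.
rewrite e3 in IH; rewrite e3 exprS expnS natrM.
set S := \sum_(i < D) _ in IH *; set a := (2 ^ D)%:R in IH *; set b := q ^+ D in IH *.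
have hab : 0 <= a * b by apply: mulr_ge0; [rewrite /a ler0n | rewrite /b exprn_ge0 //; lra].
have id : a * b * q / (2 * q - 1) + q * (a * b) = 2%:R * a * (q * b) * q / (2 * q - 1).
  by field; lra.
rewrite -id; move: IH; set u := a * b * q / (2 * q - 1); move: u => u.
have : q * b * a = q * (a * b) by ring.
move: (q * (a * b)) => v; lra.
Qed.

Section PrF.
Variable R : realType.
Variable d : nat.
Hypothesis d_gt0 : (0 < d)%N.
Local Notation n := (nedges d).
Variable q : R.
Hypothesis qh : 1/2 < q.
Hypothesis q1 : q <= 1.
Local Notation p := (fun _ : 'I_n => q).

Lemma Gd_eq : Gd d q = \sum_(j < d) (q ^+ j - q ^+ j.+1) * (2 ^ j)%:R + q ^+ d * (2 ^ d)%:R.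
Proof.
rewrite /Gd big_ord_recr /= /cj ltnn; congr (_ + _).
by apply: eq_bigr => j _; rewrite /= ltn_ord.
Qed.

Lemma Gd_pos : 0 < Gd d q.
Proof.
rewrite /Gd; apply: (@lt_le_trans _ _ (cj d q d * (2 ^ d)%:R)).
  rewrite /cj ltnn; apply: mulr_gt0; last by rewrite ltr0n expn_gt0.
  by apply: exprn_gt0; have := qh; lra.
rewrite big_ord_recr /= lerDr; apply: sumr_ge0 => j _; apply: mulr_ge0 => //.
by apply: cj_ge0; have := qh; have := q1; lra.
Qed.

Definition PrF : R := \sum_(x : input n) prob p x * (binary_tree_fun x : bool)%:R.

Lemma PrF_ge : (2 ^ d)%:R * q ^+ d / Gd d q <= PrF.
Proof.
have q0 : 0 <= q by have := qh; lra.
have tp := Gd_pos; set t := Gd d q in tp *.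
have pw : forall x : input n, Z R x <= t / 2 * (binary_tree_fun x : bool)%:R + Z R x ^+ 2 / (2 * t).
  move=> x; have z0 : 0 <= Z R x.
    by apply: sumr_ge0 => l _; rewrite /alive ler0n.
  rewrite f_L //; case: existsP => [_|hn].
    rewrite mulr1; set z := Z R x.
    have e1 : t / 2 + z ^+ 2 / (2 * t) - z = (z - t) ^+ 2 / (2 * t) by field; lra.
    have : 0 <= (z - t) ^+ 2 / (2 * t) by apply: divr_ge0; [exact: sqr_ge0 | lra].
    lra.
  have -> : Z R x = 0.
    by rewrite /Z big1 // => l _; rewrite /alive; case: forall_inP => // h; case: hn; exists l; apply/forall_inP.
  rewrite mulr0 expr0n /= mul0r addr0; lra.
have h1 : (2 ^ d)%:R * q ^+ d <= t / 2 * PrF + ((2 ^ d)%:R * q ^+ d * t) / (2 * t).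
  rewrite -(EZ d_gt0 q).
  apply: (@le_trans _ _ (\sum_(x : input n) prob p x * (t / 2 * (binary_tree_fun x : bool)%:R + Z R x ^+ 2 / (2 * t)))).
    by apply: ler_sum => x _; apply: ler_wpM2l; [exact: prob_ge0 | exact: pw].
  under eq_bigr do rewrite mulrDr.
  rewrite big_split /= lerD //.
    rewrite /PrF big_distrr /=; apply: ler_sum => x _; by rewrite mulrCA.
  rewrite -(@ler_pM2r _ (2 * t)) ?mulr_gt0 //.
  rewrite [X in _ <= X](_ : _ = (\sum_(x : input n) prob p x * Z R x) * t); last by field; lra.
  rewrite (EZ d_gt0 q) big_distrl /=.
  apply: (@le_trans _ _ (\sum_(x : input n) prob p x * Z R x ^+ 2)); last exact: EZ2.
  apply: ler_sum => x _; rewrite le_eqVlt; apply/orP; left; apply/eqP; field; lra.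
have e : (2 ^ d)%:R * q ^+ d * t / (2 * t) = (2 ^ d)%:R * q ^+ d / 2 by field; lra.
rewrite e in h1; rewrite ler_pdivrMr //.
set A := (2 ^ d)%:R * q ^+ d in h1 *; nra.
Qed.

Lemma PrF_ge2 : (2 * q - 1) / q <= PrF.
Proof.
have qh' := qh.
apply: le_trans PrF_ge.
have hG := G_bound d qh q1; rewrite -Gd_eq in hG.
have tp := Gd_pos; set t := Gd d q in tp hG *.
have q0 : 0 < q by have := qh; lra.
have eA : (2 * q) ^+ d = (2 ^ d)%:R * q ^+ d by rewrite exprMn natrX.
rewrite eA in hG.
set A := (2 ^ d)%:R * q ^+ d in hG *.
have Ap : 0 < A by rewrite /A mulr_gt0 ?exprn_gt0 // ltr0n expn_gt0.
have h2 : t * (2 * q - 1) <= A * q.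
  rewrite -(@ler_pM2r _ (2 * q - 1)) in hG; last by lra.
  move: hG; have -> : A * q / (2 * q - 1) * (2 * q - 1) = A * q by field; lra.
  by [].
have e : A / t - (2 * q - 1) / q = (A * q - t * (2 * q - 1)) / (t * q) by field; lra.
have : 0 <= (A * q - t * (2 * q - 1)) / (t * q).
  by apply: divr_ge0; [lra | apply: mulr_ge0; lra].
lra.
Qed.

End PrF.

Lemma sum_lin_lb (R : realType) (a : nat -> R) (th b : R) (K : nat) :
  (forall k, (k < K)%N -> th - k%:R * b <= a k) -> 0 <= b ->
  K%:R * th - b * K%:R ^+ 2 / 2 <= \sum_(0 <= k < K) a k.
Proof.
move=> ha hb; elim: K ha => [|K IH] ha.
  by rewrite big_geq // mul0r expr0n /= mulr0 mul0r subr0.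
rewrite big_nat_recr //=.
have h1 := IH (fun k hk => ha k (ltnW hk)).
have h2 := ha K (ltnSn K).
rewrite -natr1.
have : K%:R * th - b * K%:R ^+ 2 / 2 + (th - K%:R * b) <= \sum_(0 <= k < K) a k + a K by lra.
have -> : (K%:R + 1) * th - b * (K%:R + 1) ^+ 2 / 2 =
  K%:R * th - b * K%:R ^+ 2 / 2 + (th - K%:R * b) - b / 2 by field.
move=> h; have : 0 <= b / 2 by lra.
lra.
Qed.

Lemma sum_tri_lb (R : realType) (a : nat -> R) (th b : R) (N : nat) :
  (forall k, 0 <= a k) -> (forall k, th - k%:R * b <= a k) -> 0 < b -> 0 < th ->
  th <= N%:R * b -> (0 < N)%N ->
  th ^+ 2 / (4 * b) <= \sum_(0 <= k < N) a k.
Proof.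
move=> a0 ha hb hth hN N0.
have ex : exists K, (K%:R * b <= th) && (K <= N)%N by exists 0%N; rewrite mul0r (ltW hth).
have bnd : forall K, (K%:R * b <= th) && (K <= N)%N -> (K <= N)%N by move=> K /andP[].
case: (ex_maxnP ex bnd) => K /andP[hK hKN] hmax.
have hK1 : th < K.+1%:R * b.
  rewrite ltNge; apply/negP => h.
  have := hmax K.+1; rewrite h /=.
  case: (leqP K.+1 N) => hn.
    by move=> /(_ isT); rewrite ltnn.
  have eK : K = N by lia.
  move=> _; rewrite -eK in hN; move: h; rewrite -natr1; lra.
case: (posnP K) => [K0|Kp].
  subst K; move: hK1; rewrite mul1r => hK1.
  rewrite big_ltn //; apply: (@le_trans _ _ th).
    have -> : th ^+ 2 / (4 * b) = th * (th / (4 * b)) by rewrite expr2; field; lra.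
    rewrite ler_piMr ?(ltW hth) // ler_pdivrMr; lra.
  have := ha 0%N; rewrite mul0r subr0 => h0.
  apply: le_trans h0 _; rewrite lerDl; apply: sumr_ge0 => k _ //.
have split : \sum_(0 <= k < K) a k <= \sum_(0 <= k < N) a k.
  rewrite (big_cat_nat (leq0n K) hKN) /= lerDl; apply: sumr_ge0 => k _ //.
apply: le_trans split.
have hl := sum_lin_lb (fun k _ => ha k) (ltW hb) (K := K).
apply: le_trans hl.
have Kr : 1 <= K%:R :> R by rewrite ler1n.
rewrite -natr1 in hK1.
have e1 : K%:R * th - b * K%:R ^+ 2 / 2 - th ^+ 2 / (4 * b) =
   (K%:R * th / 2 - th ^+ 2 / (4 * b)) + K%:R * (th - K%:R * b) / 2.
  by field; lra.
have h3 : 0 <= K%:R * (th - K%:R * b) / 2.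
  by apply: divr_ge0; [apply: mulr_ge0; lra | lra].
have h4 : th ^+ 2 / (4 * b) <= K%:R * th / 2.
  have -> : th ^+ 2 / (4 * b) = th * (th / (4 * b)) by rewrite expr2; field; lra.
  have -> : K%:R * th / 2 = th * (K%:R / 2) by field.
  rewrite ler_pM2l // ler_pdivrMr; last lra.
  have -> : K%:R / 2 * (4 * b) = 2 * K%:R * b by field.
  nra.
lra.
Qed.

Section NonAd.
Variable R : realType.
Variable d : nat.
Hypothesis d_gt0 : (0 < d)%N.
Local Notation n := (nedges d).
Variable q : R.
Hypothesis qh : 1/2 < q.
Hypothesis q1 : q <= 1.
Local Notation p := (fun _ : 'I_n => q).
Local Notation c := (fun _ : 'I_n => (1 : R)).
Local Notation f := (@binary_tree_fun d).

Lemma cert (T : {set 'I_n}) (x : input n) :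
  determined f T x -> f x -> exists l, (L l \subset T) && [forall e in L l, x e].
Proof.
move=> /forallP /(_ [ffun i => (i \in T) && x i]) /implyP H fx.
have : f [ffun i => (i \in T) && x i].
  rewrite (eqP (H _)) //; apply/forall_inP => i iT; by rewrite ffunE iT.
rewrite f_L // => /existsP[l /forall_inP hl]; exists l; apply/andP; split.
  by apply/fintype.subsetP => e /hl; rewrite ffunE => /andP[].
by apply/forall_inP => e /hl; rewrite ffunE => /andP[].
Qed.

Definition leafe (l : 'I_(2 ^ d)) : 'I_n :=
  Ordinal (idx_lt d_gt0 0 (proj2 (andP (leaf_bounds l)))).

Lemma leafe_in l : leafe l \in L l.
Proof.
rewrite inE; apply/existsP; exists (Ordinal d_gt0); by rewrite /= eqxx.
Qed.

Lemma leafe_inj : injective leafe.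
Proof.
move=> l l' /(congr1 val) /=; rewrite expn0 !divn1.
have := leaf_bounds l; have := leaf_bounds l'.
have : (2 <= 2 ^ d)%N by rewrite (_ : 2 = 2 ^ 1)%N // leq_exp2l.
rewrite /leafv => h2 /andP[h3 _] /andP[h4 _] e; apply: ord_inj; lia.
Qed.

Lemma card_sub (T : {set 'I_n}) : (#|[pred l | L l \subset T]| <= #|T|)%N.
Proof.
rewrite -(card_in_imset (f := leafe)); last by move=> a b _ _; exact: leafe_inj.
apply: subset_leq_card; apply/fintype.subsetP => e /imsetP[l hl ->].
by move: hl; rewrite inE => /fintype.subsetP; apply; exact: leafe_in.
Qed.

Lemma detf_bound (T : {set 'I_n}) :
  \sum_(x : input n) prob p x * (determined f T x && f x : bool)%:R <= #|T|%:R * q ^+ d.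
Proof.
have q0 : 0 <= q by have := qh; lra.
apply: (@le_trans _ _ (\sum_(x : input n) prob p x * \sum_(l | L l \subset T) alive R x l)).
  apply: ler_sum => x _; apply: ler_wpM2l; first exact: prob_ge0.
  case: (boolP (determined f T x && f x)) => [/andP[hd hf]|_].
    have [l /andP[hs ha]] := cert hd hf.
    rewrite (bigD1 l) //= /alive ha /= lerDl; apply: sumr_ge0 => i _; exact: ler0n.
  by apply: sumr_ge0 => i _; exact: ler0n.
under eq_bigr do rewrite big_distrr /=.
rewrite exchange_big /=.
rewrite (eq_bigr (fun _ => q ^+ d)); last by move=> l _; rewrite /alive pr_all card_L.
rewrite sumr_const -[X in X <= _]mulr_natl; apply: ler_wpM2r; first exact: exprn_ge0.
by rewrite ler_nat; exact: card_sub.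
Qed.

Lemma card_first (s : {perm 'I_n}) (k : nat) : (#|first_tested s k| <= k)%N.
Proof.
apply: leq_trans (leq_imset_card _ _) _.
case: k => [|k].
  by rewrite leqn0; apply/eqP; apply: eq_card0 => j; rewrite inE.
rewrite -[X in (_ <= X)%N]card_ord.
apply: (leq_card_in (fun j : 'I_n => (inord j : 'I_k.+1))) => a b.
rewrite !inE => ha hb /(congr1 (@nat_of_ord _)); rewrite !inordK //.
exact: ord_inj.
Qed.

Lemma cost_na_lb (s : {perm 'I_n}) :
  ((2 * q - 1) / q) ^+ 2 / (4 * q ^+ d) <= cost_nonadaptive f c p s.
Proof.
have q0 : 0 < q by have := qh; lra.
have qh' := qh; have q1' := q1.
pose a := fun k : nat => \sum_(x : input n) prob p x * (~~ determined f (first_tested s k) x : bool)%:R.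
have -> : cost_nonadaptive f c p s = \sum_(0 <= k < n) a k.
  rewrite /cost_nonadaptive big_mkord /a.
  under eq_bigr do rewrite /nonadaptive_run_cost big_distrr /=.
  rewrite exchange_big /=; apply: eq_bigr => k _; apply: eq_bigr => x _.
  by case: determined; rewrite /= ?mulr0 ?mulr1.
apply: sum_tri_lb.
- move=> k; apply: sumr_ge0 => x _; apply: mulr_ge0; [apply: prob_ge0 => //; lra | exact: ler0n].
- move=> k; have hP := PrF_ge2 d_gt0 qh q1.
  have hD := detf_bound (first_tested s k).
  have hc : (#|first_tested s k|%:R : R) <= k%:R by rewrite ler_nat card_first.
  have hq : 0 <= q ^+ d by apply: exprn_ge0; lra.
  have hk : #|first_tested s k|%:R * q ^+ d <= k%:R * q ^+ d by apply: ler_wpM2r.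
  have : PrF d q - \sum_(x : input n) prob p x * (determined f (first_tested s k) x && f x : bool)%:R <= a k.
    rewrite /PrF -sumrB; apply: ler_sum => x _; rewrite -mulrBr; apply: ler_wpM2l.
      by apply: prob_ge0 => //; lra.
    by case: (determined _ _ x); case: (binary_tree_fun x); rewrite /= ?subrr ?subr0 ?sub0r ?lexx ?ler01 //; lra.
  lra.
- by apply: exprn_gt0.
- by apply: divr_gt0; lra.
- have h1 : (2 * q - 1) / q <= 1 by rewrite ler_pdivrMr //; lra.
  apply: le_trans h1 _.
  have : (2 ^ d <= n)%N.
    rewrite /nedges; have : (2 <= 2 ^ d)%N by rewrite (_ : 2 = 2 ^ 1)%N // leq_exp2l.
    rewrite expnS; lia.
  rewrite -(ler_nat R) => hn.
  have : 1 <= (2 ^ d)%:R * q ^+ d.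
    rewrite natrX -exprMn; apply: exprn_ege1; lra.
  have : (2 ^ d)%:R * q ^+ d <= n%:R * q ^+ d.
    by apply: ler_wpM2r => //; apply: exprn_ge0; lra.
  lra.
- exact: n_gt0.
Qed.

Lemma OPT_N_lb : ((2 * q - 1) / q) ^+ 2 / (4 * q ^+ d) <= OPT_N f c p.
Proof.
apply: lb_le_inf.
  by exists (cost_nonadaptive f c p 1%g); exists 1%g.
by move=> r [s ->]; exact: cost_na_lb.
Qed.

End NonAd.
Local Open Scope nat_scope.

Section Nodes.
Variable d : nat.
Hypothesis d_gt0 : (0 < d)%N.
Local Notation n := (nedges d).
Local Notation f := (@binary_tree_fun d).

Definition G (b : nat -> bool) (w : nat) : bool :=
  [forall i : 'I_d.+1, (2 <= w %/ 2 ^ i)%N ==> b (w %/ 2 ^ i - 2)%N].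

Lemma div_big (w i : nat) : (w < 2 ^ d.+1)%N -> (d.+1 <= i)%N -> w %/ 2 ^ i = 0%N.
Proof.
move=> hw hi; apply: divn_small.
by apply: leq_trans hw _; rewrite leq_exp2l.
Qed.

Lemma GP (b : nat -> bool) (w : nat) : (w < 2 ^ d.+1)%N ->
  reflect (forall i, (2 <= w %/ 2 ^ i)%N -> b (w %/ 2 ^ i - 2)%N) (G b w).
Proof.
move=> hw; apply: (iffP forallP) => [H i hi|H i].
  case: (ltnP i d.+1) => hid.
    by have := H (Ordinal hid); rewrite /= hi.
  by rewrite div_big in hi.
by apply/implyP; apply: H.
Qed.

Lemma G_rec (b : nat -> bool) (w : nat) : (w < 2 ^ d.+1)%N ->
  G b w = ((2 <= w)%N ==> b (w - 2)%N) && G b (w %/ 2).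
Proof.
move=> hw; have hw2 : (w %/ 2 < 2 ^ d.+1)%N by apply: leq_ltn_trans (leq_div _ _) hw.
apply/(GP b hw)/andP => [H|[/implyP h0 /(GP b hw2) H] i].
  split; first by apply/implyP => h; have := H 0%N; rewrite expn0 divn1; apply.
  by apply/(GP b hw2) => i; rewrite -divnMA -expnS; apply: H.
case: i => [|i]; first by rewrite expn0 divn1.
by rewrite expnS divnMA; apply: H.
Qed.

Lemma G_anc (b : nat -> bool) (w m : nat) : (w < 2 ^ d.+1)%N -> G b w -> G b (w %/ 2 ^ m).
Proof.
move=> hw /(GP b hw) H.
have hw2 : (w %/ 2 ^ m < 2 ^ d.+1)%N by apply: leq_ltn_trans (leq_div _ _) hw.
by apply/(GP b hw2) => i; rewrite -divnMA -expnD; apply: H.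
Qed.

Lemma G_ES (x : input n) (w : nat) : (0 < w)%N -> (w < 2 ^ d.+1)%N ->
  G (bit_at x) w = [forall e in ES d w (trunc_log 2 w), x e].
Proof.
move=> w0 hw; rewrite -reach_ES //.
have /andP[hj1 hj2] := trunc_log_bounds (isT : (1 < 2)%N) w0.
set j := trunc_log 2 w in hj1 hj2 *.
apply/(GP _ hw)/forallP => [H i|H i hi].
  by apply: H; exact: ge2_div hj1 (ltn_ord i).
case: (ltnP i j) => hij; first by apply: (H (Ordinal hij)).
exfalso; move: hi; rewrite leq_divRL ?expn_gt0 // leqNgt => /negP; apply.
apply: leq_trans hj2 _; rewrite mulnC -expnSr leq_exp2l //.
Qed.

Lemma f_G (x : input n) : f x = [exists l : 'I_(2 ^ d), G (bit_at x) (leafv l)].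
Proof.
rewrite f_L //; apply: eq_existsb => l.
have /andP[h1 h2] := leaf_bounds l.
have l0 : (0 < leafv l)%N by apply: leq_trans h1; rewrite expn_gt0.
by rewrite G_ES // (trunc_log_eq (isT : (1 < 2)%N) (leaf_bounds l)).
Qed.

Lemma G_agree (x y : input n) (w : nat) : (w < 2 ^ d.+1)%N ->
  (forall v, (2 <= v)%N -> (v < 2 ^ d.+1)%N -> G (bit_at x) (v %/ 2) -> bit_at x (v - 2) = bit_at y (v - 2)) ->
  G (bit_at x) w = G (bit_at y) w.
Proof.
move=> hw H; elim/ltn_ind: w hw => w IH hw.
case: (ltnP w 2) => w2.
  apply/(GP _ hw)/(GP _ hw) => _ i hi; exfalso; move: hi; rewrite leqNgt => /negP; apply;
  by apply: leq_ltn_trans (leq_div _ _) w2.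
have hw2 : (w %/ 2 < 2 ^ d.+1)%N by apply: leq_ltn_trans (leq_div _ _) hw.
have hwm2 : (w %/ 2 < w)%N := ltn_Pdiv (isT : (1 < 2)%N) (leq_trans (isT : (0 < 2)%N) w2).
rewrite !(G_rec _ hw) -(IH _ hwm2 hw2) w2 /=.
case hG: (G (bit_at x) (w %/ 2)); last by rewrite !andbF.
by rewrite (H w w2 hw hG).
Qed.

End Nodes.

Section Tree.
Variable d : nat.
Hypothesis d_gt0 : (0 < d)%N.
Local Notation n := (nedges d).
Local Notation f := (@binary_tree_fun d).

Definition inA (A : {set 'I_n}) (k : nat) : bool := [exists e in A, val e == k].
Definition par (e : 'I_n) : nat := (val e + 2) %/ 2.
Definition pr (A : {set 'I_n}) (e : 'I_n) : bool := G d (inA A) (par e).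
Definition prx (x : input n) (e : 'I_n) : bool := G d (bit_at x) (par e).

Fixpoint build (l : seq 'I_n) (A : {set 'I_n}) : dtree n :=
  match l with
  | [::] => Leaf n
  | e :: l' => if pr A e then Node e (build l' A) (build l' (e |: A)) else build l' A
  end.

Lemma n_eq : n.+2 = 2 ^ d.+1.
Proof.
rewrite /nedges; have : (2 <= 2 ^ d.+1) by rewrite (_ : 2 = 2 ^ 1) // leq_exp2l.
lia.
Qed.

Lemma par_lt (e : 'I_n) : par e < 2 ^ d.+1.
Proof.
rewrite /par -n_eq; apply: leq_ltn_trans (leq_div _ _) _.
by rewrite addn2 ltnS ltnS ltn_ord.
Qed.

Lemma bit_at_val (x : input n) (e : 'I_n) : bit_at x (val e) = x e.
Proof. by rewrite (bit_atE x (ltn_ord e)); congr (x _); apply: val_inj. Qed.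

Lemma det_from (x : input n) (S : {set 'I_n}) :
  (forall e, prx x e -> e \in S) -> determined f S x.
Proof.
move=> hS; apply/forallP => y; apply/implyP => /forall_inP hy.
rewrite !f_G //; apply/eqP; apply: eq_existsb => l.
have /andP[_ h2] := leaf_bounds l.
apply/esym; apply: G_agree => // v v2 vlt hG.
have hk : v - 2 < n by rewrite -(ltn_add2r 2) !addn2 n_eq; lia.
pose e := Ordinal hk.
have eS : e \in S.
  apply: hS; rewrite /prx /par /= subnK //.
by rewrite !(bit_atE _ hk) -/e (eqP (hy e eS)).
Qed.

Lemma pr_head (e : 'I_n) (A : {set 'I_n}) (x : input n) :
  (forall e', e' \in A -> x e') ->
  (forall e' : 'I_n, val e' < val e -> prx x e' -> x e' -> e' \in A) ->
  pr A e = prx x e.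
Proof.
move=> hA hA2; have hp := par_lt e.
apply/(GP _ hp)/(GP _ hp) => H i hi.
  have /existsP[e' /andP[e'A /eqP ev]] := H i hi.
  by rewrite -ev bit_at_val; apply: hA.
have hk : par e %/ 2 ^ i - 2 < n := idx_lt d_gt0 i hp.
pose e' := Ordinal hk.
have xe' : x e' by rewrite -bit_at_val /=; apply: H.
have lt : nat_of_ord e' < nat_of_ord e.
  have h2 : par e * 2 <= nat_of_ord e + 2 by rewrite /par leq_trunc_div.
  have h1 : par e %/ 2 ^ i <= par e := leq_div _ _.
  rewrite /=; move: hi h1 h2; move: (par e %/ 2 ^ i) (par e) (nat_of_ord e) => a b c; lia.
have px : prx x e'.
  rewrite /prx /par /= subnK // -divnMA -expnSr.
  by apply: G_anc => //; apply/(GP _ hp).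
apply/existsP; exists e'; rewrite hA2 //=.
Qed.

Lemma run_ok_build (x : input n) (l : seq 'I_n) (A S : {set 'I_n}) :
  sorted (fun a b : 'I_n => val a < val b) l ->
  (forall e', e' \in A -> x e') ->
  (forall e', e' \notin l -> prx x e' -> e' \in S) ->
  (forall e', e' \notin l -> prx x e' -> x e' -> e' \in A) ->
  run_ok f (build l A) x S.
Proof.
elim: l A S => [|e l IH] A S hs hA hS hA2.
  by rewrite /= det_from // => e; apply: hS.
have hall : all (fun b : 'I_n => val e < val b) l.
  have tr : transitive (fun a b : 'I_n => val a < val b).
    by move=> a b c h1 h2; apply: ltn_trans h1 h2.
  exact: order_path_min tr hs.
have hs' : sorted (fun a b : 'I_n => val a < val b) l := path_sorted hs.
have hnot : forall e' : 'I_n, val e' < val e -> e' \notin e :: l.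
  move=> e' lt; rewrite inE negb_or; apply/andP; split.
    by apply/eqP => ee; rewrite ee ltnn in lt.
  apply/negP => /(allP hall) lt2; have := ltn_trans lt lt2; by rewrite ltnn.
have eq := pr_head hA (fun e' lt => hA2 e' (hnot e' lt)).
rewrite /=; case hpr: (pr A e).
  rewrite /=; apply/orP; right.
  case hx: (x e).
    apply: IH => //.
    - by move=> e'; rewrite !inE => /orP[/eqP ->|/hA].
    - move=> e' hn hp; rewrite !inE; case: (eqVneq e' e) => // ne /=.
      by apply: hS => //; rewrite inE negb_or ne.
    - move=> e' hn hp hxe; rewrite !inE; case: (eqVneq e' e) => // ne /=.
      by apply: hA2 => //; rewrite inE negb_or ne.
  apply: IH => //.
  - move=> e' hn hp; rewrite !inE; case: (eqVneq e' e) => // ne /=.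
    by apply: hS => //; rewrite inE negb_or ne.
  - move=> e' hn hp hxe; case: (eqVneq e' e) => [ee|ne].
      by rewrite ee hx in hxe.
    by apply: hA2 => //; rewrite inE negb_or ne.
apply: IH => //.
- move=> e' hn hp; case: (eqVneq e' e) => [ee|ne].
    by move: hp; rewrite ee -eq hpr.
  by apply: hS => //; rewrite inE negb_or ne.
- move=> e' hn hp hxe; case: (eqVneq e' e) => [ee|ne].
    by move: hp; rewrite ee -eq hpr.
  by apply: hA2 => //; rewrite inE negb_or ne.
Qed.

Definition T0 : dtree n := build (enum 'I_n) finset.set0.

Lemma T0_valid : valid_tree f T0.
Proof.
move=> x; apply: run_ok_build.
- by have := iota_ltn_sorted 0 n; rewrite -val_enum_ord sorted_map.
- by move=> e; rewrite finset.in_set0.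
- by move=> e; rewrite mem_enum.
- by move=> e; rewrite mem_enum.
Qed.

End Tree.
Local Open Scope ring_scope.

Section Cost.
Variable R : realType.
Variable d : nat.
Hypothesis d_gt0 : (0 < d)%N.
Local Notation n := (nedges d).
Local Notation f := (@binary_tree_fun d).
Variable q : R.
Hypothesis qh : 1/2 < q.
Hypothesis q1 : q <= 1.
Local Notation p := (fun _ : 'I_n => q).
Local Notation c := (fun _ : 'I_n => (1 : R)).

Lemma run_cost_ge0 (t : dtree n) (x : input n) (S : {set 'I_n}) : 0 <= run_cost f c t x S.
Proof.
elim: t S => [|e t0 IH0 t1 IH1] S /=; first by case: determined.
case: determined => //; case: (x e); [have := IH1 (e |: S) | have := IH0 (e |: S)]; lra.
Qed.

Lemma pr_prx (A : {set 'I_n}) (x : input n) (e : 'I_n) :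
  (forall e', e' \in A -> x e') -> pr A e -> prx x e.
Proof.
move=> hA; have hp := par_lt d_gt0 e.
move=> /(GP _ hp) H; apply/(GP _ hp) => i hi.
have /existsP[e' /andP[e'A /eqP ev]] := H i hi.
by rewrite -ev bit_at_val; apply: hA.
Qed.

Lemma run_cost_build (x : input n) (l : seq 'I_n) (A S : {set 'I_n}) :
  (forall e', e' \in A -> x e') ->
  run_cost f c (build l A) x S <= \sum_(e <- l) (prx x e : bool)%:R.
Proof.
elim: l A S => [|e l IH] A S hA.
  by rewrite /= big_nil; case: determined.
rewrite big_cons /=.
have s0 : 0 <= \sum_(e <- l) (prx x e : bool)%:R :> R.
  by apply: sumr_ge0 => i _; exact: ler0n.
case hpr: (pr A e).
  rewrite /= (pr_prx hA hpr) /=.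
  case: determined; first lra.
  case hx: (x e).
    have hA' : forall e', e' \in e |: A -> x e' by move=> e'; rewrite !inE => /orP[/eqP ->|/hA].
    have := IH (e |: A) (e |: S) hA'; lra.
  have := IH A (e |: S) hA; lra.
have := IH A S hA; have : (0 : R) <= (prx x e : bool)%:R by exact: ler0n.
lra.
Qed.

Lemma prx_prob (e : 'I_n) :
  \sum_(x : input n) prob p x * (prx x e : bool)%:R = q ^+ trunc_log 2 (par e).
Proof.
have hp := par_lt d_gt0 e.
have p0 : (0 < par e)%N by rewrite /par divn_gt0 // addn2.
have /andP[h1 _] := trunc_log_bounds (isT : (1 < 2)%N) p0.
rewrite -(card_ES d_gt0 h1 hp) -pr_all; apply: eq_bigr => x _.
by rewrite /prx G_ES.
Qed.

Lemma sum_depth (D : nat) :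
  \sum_(0 <= e < 2 ^ D.+1 - 2) q ^+ trunc_log 2 ((e + 2) %/ 2) =
  \sum_(j < D) (2 ^ j.+1)%:R * q ^+ j.
Proof.
elim: D => [|D IH]; first by rewrite big_ord0 big_geq.
rewrite big_ord_recr /= -IH.
have hle : (2 ^ D.+1 - 2 <= 2 ^ D.+2 - 2)%N.
  by rewrite leq_sub2r // leq_exp2l.
rewrite (big_cat_nat (leq0n _) hle) /=; congr (_ + _).
have h2 : (2 <= 2 ^ D.+1)%N by rewrite (_ : 2 = 2 ^ 1)%N // leq_exp2l.
rewrite (eq_big_nat _ _ (F2 := fun _ => q ^+ D)); last first.
  move=> e /andP[he1 he2]; congr (_ ^+ _); apply: trunc_log_eq => //.
  rewrite leq_divRL // ltn_divLR //; apply/andP; split.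
    by rewrite -expnSr; move: he1; rewrite expnS; lia.
  by rewrite -expnSr; move: he2; rewrite !expnS; lia.
rewrite sumr_const_nat mulr_natl; congr (_ *+ _).
rewrite !expnS; lia.
Qed.

Lemma geom_bound (r : R) (D : nat) : 1 < r -> \sum_(j < D) r ^+ j <= r ^+ D / (r - 1).
Proof.
move=> hr; elim: D => [|D IH].
  by rewrite big_ord0 expr0 divr_ge0 //; lra.
rewrite big_ord_recr /=.
have -> : r ^+ D.+1 / (r - 1) = r ^+ D / (r - 1) + r ^+ D.
  by rewrite exprS; field; lra.
lra.
Qed.

Lemma cost_T0 : cost_adaptive f c p (T0 d) <= 2 * (2 * q) ^+ d / (2 * q - 1).
Proof.
have q0 : 0 <= q by have := qh; lra.
have qh' := qh; have q1' := q1.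
apply: (@le_trans _ _ (\sum_(x : input n) prob p x * \sum_(e <- enum 'I_n) (prx x e : bool)%:R)).
  apply: ler_sum => x _; apply: ler_wpM2l; first exact: prob_ge0.
  by apply: run_cost_build => e; rewrite finset.in_set0.
under eq_bigr do rewrite big_distrr /=.
rewrite exchange_big /= big_enum /=.
under eq_bigr do rewrite prx_prob.
have -> : \sum_(e : 'I_n) q ^+ trunc_log 2 (par e) = \sum_(0 <= e < n) q ^+ trunc_log 2 ((e + 2) %/ 2).
  by rewrite big_mkord.
rewrite sum_depth.
have -> : \sum_(j < d) (2 ^ j.+1)%:R * q ^+ j = 2 * \sum_(j < d) (2 * q) ^+ j.
  rewrite big_distrr /=; apply: eq_bigr => j _; rewrite exprMn natrX exprS; ring.
rewrite -mulrA ler_pM2l; last lra.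
apply: geom_bound; lra.
Qed.

Lemma OPT_A_ub : OPT_A f c p <= 2 * (2 * q) ^+ d / (2 * q - 1).
Proof.
have q0 : 0 <= q by have := qh; lra.
apply: le_trans cost_T0.
apply: ge_inf; last by exists (T0 d); split => //; exact: T0_valid d_gt0.
exists 0 => r [t [_ ->]]; rewrite /cost_adaptive; apply: sumr_ge0 => x _.
apply: mulr_ge0; [exact: prob_ge0 | exact: run_cost_ge0].
Qed.

End Cost.

Lemma powX (R : realType) (eps : R) (d m : nat) : 0 < eps -> (2 ^ d <= m)%N -> (m <= 2 * 2 ^ d)%N ->
  (m%:R : R) `^ (1 - 2 * eps / ln 2) <= 2 * (2 ^ d)%:R / (expR (eps * d%:R) * expR (eps * d%:R)).
Proof.
move=> e0 h1 h2.
set T : R := (2 ^ d)%:R.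
have Tp : 0 < T by rewrite /T ltr0n expn_gt0.
have nT1 : T <= m%:R by rewrite /T ler_nat.
have nT2 : (m%:R : R) <= 2 * T by rewrite /T -natrM ler_nat.
have ln2 : 0 < ln (2 : R) by apply: ln_gt0; rewrite ltr1n.
have np : (0 : R) < m%:R by apply: lt_le_trans nT1.
have lnT : ln T = d%:R * ln 2 by rewrite /T natrX lnXn // mulr_natl.
set a := 1 - 2 * eps / ln 2.
rewrite /powR (negbTE (lt0r_neq0 np)).
have l1 : ln (m%:R : R) <= ln (2 * T).
  by rewrite ler_ln // posrE // mulr_gt0.
have l2 : ln T <= ln (m%:R : R).
  by rewrite ler_ln // posrE.
have l3 : a * ln (m%:R : R) <= ln (2 * T) - 2 * eps * d%:R.
  rewrite /a mulrBl mul1r.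
  have : 2 * eps / ln 2 * ln T <= 2 * eps / ln 2 * ln (m%:R : R).
    by rewrite ler_pM2l // divr_gt0 // mulr_gt0.
  have -> : 2 * eps / ln 2 * ln T = 2 * eps * d%:R by rewrite lnT; field; lra.
  lra.
apply: le_trans (_ : expR (ln (2 * T) - 2 * eps * d%:R) <= _).
  by rewrite ler_expR.
rewrite expRB lnK ?posrE ?mulr_gt0 // -exp.expRD.
by have -> : eps * d%:R + eps * d%:R = 2 * eps * d%:R by ring.
Qed.

Lemma combine (R : realType) (eps T P E X OA ON : R) : 0 < eps -> eps <= 1 / 2 -> 0 < T -> 0 < P ->
  P <= E -> 0 <= X -> X <= 2 * T / (E * E) -> 0 <= OA -> OA <= 2 * P / eps ->
  eps ^+ 2 * T / ((1 + eps) ^+ 2 * P) <= ON -> 1 / 9 * eps ^+ 3 * X * OA <= ON.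
Proof.
move=> e0 e1 Tp Pp PE X0 hX A0 hA hN.
have Ep : 0 < E by apply: lt_le_trans PE.
apply: le_trans hN.
have c0 : 0 <= 1 / 9 * eps ^+ 3 by apply: mulr_ge0; [lra | apply: exprn_ge0; lra].
have step1 : 1 / 9 * eps ^+ 3 * X * OA <= 1 / 9 * eps ^+ 3 * (2 * T / (E * E)) * (2 * P / eps).
  apply: ler_pM => //; first by apply: mulr_ge0.
  by apply: ler_pM.
apply: le_trans step1 _.
have EE : 0 < E * E by apply: mulr_gt0.
have e3 : 1 / 9 * eps ^+ 3 * (2 * T / (E * E)) * (2 * P / eps) = 4 / 9 * (eps ^+ 2 * T) * P / (E * E).
  by field; apply/andP; split; apply/eqP; lra.
rewrite e3.
have hPE : P * P <= E * E by apply: ler_pM; lra.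
have s1 : 1 + eps <= 3 / 2 by lra.
have h1e : (1 + eps) ^+ 2 <= 9 / 4 by rewrite expr2; nra.
have s2 : 0 < (1 + eps) ^+ 2 by apply: exprn_gt0; lra.
have kpos : 0 < eps ^+ 2 * T by apply: mulr_gt0 => //; apply: exprn_gt0.
set K := eps ^+ 2 * T in kpos *.
move: h1e s2; set W := (1 + eps) ^+ 2 => h1e s2.
have g1 : 4 / 9 * K * P / (E * E) <= 4 / 9 * K / P.
  have e : 4 / 9 * K / P - 4 / 9 * K * P / (E * E) = 4 / 9 * K * (E * E - P * P) / (P * (E * E)).
    by field; apply/andP; split; apply/eqP; lra.
  have : 0 <= 4 / 9 * K * (E * E - P * P) / (P * (E * E)).
    apply: divr_ge0; last by apply: mulr_ge0; lra.
    by apply: mulr_ge0; [apply: mulr_ge0; lra | lra].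
  lra.
have g2 : 4 / 9 * K / P <= K / (W * P).
  have e : K / (W * P) - 4 / 9 * K / P = K * (1 - 4 / 9 * W) / (W * P).
    by field; apply/andP; split; apply/eqP; lra.
  have : 0 <= K * (1 - 4 / 9 * W) / (W * P).
    apply: divr_ge0; last by apply: mulr_ge0; lra.
    by apply: mulr_ge0; lra.
  lra.
by apply: le_trans g2.
Qed.

Lemma main_ineq (R : realType) (eps : R) (d : nat) : 0 < eps -> eps <= 1 / 2 -> (0 < d)%N ->
  let n := nedges d in
  let f := @binary_tree_fun d in
  let c := fun _ : 'I_n => (1 : R) in
  let p := fun _ : 'I_n => (1 + eps) / 2 in
  1 / 9 * eps ^+ 3 * ((n%:R : R) `^ (1 - 2 * eps / ln 2)) * OPT_A f c p <= OPT_N f c p.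
Proof.
move=> e0 e1 d0; cbv zeta.
have qh : 1 / 2 < (1 + eps) / 2 by lra.
have q1 : (1 + eps) / 2 <= 1 by lra.
have hN := OPT_N_lb d0 qh q1.
have hA := OPT_A_ub d0 qh q1.
have hA0 : 0 <= OPT_A (binary_tree_fun (d:=d)) (fun _ : 'I_(nedges d) => (1 : R)) (fun _ => (1 + eps) / 2).
  apply: lb_le_inf; first by exists (cost_adaptive (binary_tree_fun (d:=d)) (fun _ : 'I_(nedges d) => (1 : R)) (fun _ => (1 + eps) / 2) (T0 d)), (T0 d); split => //; exact: T0_valid.
  move=> r [t [_ ->]]; rewrite /cost_adaptive; apply: sumr_ge0 => x _.
  apply: mulr_ge0; [apply: prob_ge0; lra | exact: run_cost_ge0].
have h2 : (2 <= 2 ^ d)%N by rewrite (_ : 2 = 2 ^ 1)%N // leq_exp2l.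
have nT1 : (2 ^ d <= nedges d)%N by rewrite /nedges expnS; lia.
have nT2 : (nedges d <= 2 * 2 ^ d)%N by rewrite /nedges expnS; lia.
have hX := powX e0 nT1 nT2.
apply: (@combine _ eps _ ((1 + eps) ^+ d) _ _ _ _ e0 e1 _ _ _ (powR_ge0 _ _) hX hA0).
- by rewrite ltr0n expn_gt0.
- by apply: exprn_gt0; lra.
- rewrite expRM_natr; apply: lerXn2r; rewrite ?nnegrE; [lra | exact: ltW (expR_gt0 _) |].
  by have := expR_ge1Dx eps; lra.
- apply: le_trans hA _.
  have -> : 2 * ((1 + eps) / 2) - 1 = eps by field.
  have -> : 2 * ((1 + eps) / 2) = 1 + eps by field.
  by rewrite lexx.
- apply: le_trans hN.
  have -> : 2 * ((1 + eps) / 2) - 1 = eps by field.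
  rewrite !expr_div_n natrX le_eqVlt; apply/orP; left; apply/eqP.
  have Pp : 0 < (1 + eps) ^+ d by apply: exprn_gt0; lra.
  have Tp : 0 < 2 ^+ d :> R by apply: exprn_gt0.
  move: Pp Tp; set P := (1 + eps) ^+ d; set T := 2 ^+ d => Pp Tp.
  field.
  by apply/and3P; split; apply/eqP; lra.
Qed.

Theorem theorem6 :
  exists c0 : Rdefinitions.R, 0 < c0 /\
  forall (eps : Rdefinitions.R) (d : nat), 0 < eps -> eps <= 1 / 2 -> (1 <= d)%N ->
    let n := nedges d in
    let f := @binary_tree_fun d in
    let c := fun _ : 'I_n => (1 : Rdefinitions.R) in
    let p := fun _ : 'I_n => (1 + eps) / 2 in
    OPT_N f c p >=
      c0 * eps ^+ 3 * ((n%:R : Rdefinitions.R) `^ (1 - 2 * eps / ln 2)) * OPT_A f c p.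
Proof.
exists (1 / 9); split; first lra.
move=> eps d e0 e1 d1.
exact: (main_ineq e0 e1 d1).
Qed.
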